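(* For integers $m\ge1$, $n\ge2$, $$S(2m,n,\pi/2)=(-1)^mn+\frac{1}{(2m-1)!}\sum_{k=1}^m n^{2k}A_{2m}^{(2k)}T_{2k-1},$$ $$S(m,n,\pi/4)=(-1)^{m/2}\,n\,\mathbb{1}_{m\text{ even}}+\frac{1}{2(m-1)!}\sum_{k=1}^m(2n)^kA_m^{(k)}E_{k-1}.$$
   Context: $S(m,n,\alpha)=\sum_{k=0}^{n-1}\cot^m\frac{\alpha+k\pi}{n}$. The arctangent numbers $A_m^{(k)}$ are defined by $\frac{(\arctan z)^k}{k!}=\sum_{m\ge k}\frac{A_m^{(k)}}{m!}z^m$. The tangent numbers $T_j$ are given by $\tan z=\sum_{j\ge0}\frac{T_j}{j!}z^j$. The Euler zigzag numbers $E_j$ are given by $\tan z+\sec z=\sum_{j\ge0}\frac{E_j}{j!}z^j$. $\mathbb{1}_{m\text{ even}}$ is $1$ if $m$ is even and $0$ otherwise. *)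

(* Defs.v *)
From Stdlib Require Import Reals Factorial.
From Coquelicot Require Import Coquelicot.
Open Scope R_scope.

Definition cot (x : R) : R := cos x / sin x.
Definition Ssum (m n : nat) (alpha : R) : R :=
  sum_n_m (fun k => (cot ((alpha + INR k * PI) / INR n)) ^ m) 0 (n - 1).

(* Coefficients of exponential generating functions are Taylor coefficients:
   if f(z) = sum_j c_j z^j / j!  near 0, then c_j = f^{(j)}(0). *)

(* arctangent numbers: (arctan z)^k / k! = sum_{m>=k} A_m^(k) z^m / m! *)
Definition arctanA (m k : nat) : R :=
  Derive_n (fun z => (atan z) ^ k / INR (fact k)) m 0.

(* tangent numbers: tan z = sum_j T_j z^j / j! *)
Definition tangentT (j : nat) : R := Derive_n tan j 0.

(* Euler zigzag numbers: tan z + sec z = sum_j E_j z^j / j! *)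
Definition zigzagE (j : nat) : R :=
  Derive_n (fun z => tan z + / cos z) j 0.

(* Main.v *)
Require Import Defs.
From Stdlib Require Import Reals Factorial List Lra Lia.
From Coquelicot Require Import Coquelicot.
Open Scope R_scope.
From HB Require Import structures.
From mathcomp Require all_boot all_algebra Rstruct zify.

Fixpoint PAB (j : nat) (y : R) : R * R :=
  match j with
  | O => (R1, R0)
  | S j => let ab := PAB j y in (Rminus (Rmult y (fst ab)) (snd ab), Rplus (fst ab) (Rmult y (snd ab)))
  end.

Fixpoint prodl (l : list R) : R := match l with nil => R1 | cons x l => Rmult x (prodl l) end.

Module MC.
Import all_boot all_algebra Rstruct zify.
Import GRing.Theory Num.Theory.
Local Open Scope ring_scope.

Fixpoint pab (j : nat) : {poly R} * {poly R} :=
  match j with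
  | O => (1, 0)
  | S j => let ab := pab j in ('X * ab.1 - ab.2, ab.1 + 'X * ab.2)
  end.

Lemma pab_horner j y : ((pab j).1.[y], (pab j).2.[y]) = PAB j y.
Proof.
elim: j => [|j IH] /=; first by rewrite !hornerE.
case: (PAB j y) IH => a b [<- <-] /=.
by rewrite !hornerE.
Qed.

Lemma pab_size j : ((pab j).1 \is monic) /\ size (pab j).1 = j.+1 /\ (size (pab j).2 <= j)%N.
Proof.
elim: j => [|j [m1 [s1 s2]]] /=.
  by rewrite monic1 size_poly1 size_poly0.
have hX : size ('X * (pab j).1) = j.+2.
  by rewrite mulrC size_mulX ?s1 // -size_poly_eq0 s1.
have mX : 'X * (pab j).1 \is monic by rewrite monicMl ?monicX.
have lt : (size (- (pab j).2)%R < size ('X * (pab j).1)%R)%N.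
  by rewrite size_opp hX; apply: leq_trans (s2) _ ; apply: leqW.
split; first by rewrite monicE lead_coefDl // (eqP mX).
split; first by rewrite size_polyDl // hX.
apply: leq_trans (size_polyD _ _) _.
rewrite geq_max s1 leqnn /=.
case: (eqVneq (pab j).2 0) => [->|nz]; first by rewrite mulr0 size_poly0.
by rewrite mulrC size_mulX // ltnS.
Qed.


Lemma inInP (x : R) (xs : list R) : List.In x xs <-> x \in xs.
Proof.
elim: xs => [|y xs IH] //=; rewrite in_cons; split.
- by case=> [->|/IH ->]; rewrite ?eqxx ?orbT.
- by case/orP => [/eqP ->|/IH]; [left|right].
Qed.

Lemma uniq_NoDup (xs : list R) : List.NoDup xs -> uniq xs.
Proof.
elim: xs => [|x xs IH] //= H; inversion H; subst.
rewrite IH // andbT; apply/negP => /inInP hin; exact: H2 hin.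
Qed.

Lemma prodl_big (xs : list R) (F : R -> R) :
  prodl (List.map F xs) = \prod_(z <- xs) F z.
Proof. elim: xs => [|x xs IH] /=; by rewrite ?big_nil ?big_cons ?IH. Qed.

Lemma factor_Q (n : nat) (sa ca : R) (xs : list R) :
  sa <> 0 -> List.length xs = n -> List.NoDup xs ->
  (forall x, List.In x xs -> Rminus (Rmult sa (fst (PAB n x))) (Rmult ca (snd (PAB n x))) = R0) ->
  forall y, Rminus (Rmult sa (fst (PAB n y))) (Rmult ca (snd (PAB n y))) =
            Rmult sa (prodl (List.map (fun x => Rminus y x) xs)).
Proof.
move=> sa0 len nd roots y.
set q : {poly R} := sa *: (pab n).1 - ca *: (pab n).2.
have qE z : q.[z] = Rminus (Rmult sa (fst (PAB n z))) (Rmult ca (snd (PAB n z))).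
  by rewrite /q -pab_horner !hornerE.
have [m1 [s1 s2]] := pab_size n.
have sa0' : sa != 0 by apply/eqP.
have sz1 : size (sa *: (pab n).1) = n.+1 by rewrite size_scale.
have lt : (size (- (ca *: (pab n).2))%R < size (sa *: (pab n).1))%N.
  by rewrite size_opp sz1 ltnS; apply: leq_trans (size_scale_leq _ _) s2.
have sq : size q = n.+1 by rewrite /q size_polyDl.
have lq : lead_coef q = sa.
  by rewrite /q lead_coefDl // lead_coefZ (eqP m1) mulr1.
have rts : all (root q) xs.
  by apply/allP => x /inInP hx; rewrite /root qE roots.
have ur : uniq_roots xs by rewrite uniq_rootsE uniq_NoDup.
have [r qr] := uniq_roots_prod_XsubC rts ur.
have mp : \prod_(z <- xs) ('X - z%:P) \is monic by apply: monic_prod_XsubC.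
have sp : size (\prod_(z <- xs) ('X - z%:P)) = n.+1.
  rewrite size_prod_XsubC -len; congr S; by elim: (xs) => //= x l ->.
have r0 : r != 0.
  by apply/eqP => r0; move: sq; rewrite qr r0 mul0r size_poly0.
have sr : size r = 1%N.
  move: sq; rewrite qr size_mul ?sp //; last by rewrite -size_poly_eq0 sp.
  move=> h; have : (size r + n.+1).-1 == n.+1 by rewrite h.
  case: (size r) => [|[|k]] //=; first by rewrite ltn_eqF.
  by rewrite !addSn /= => /eqP; lia.
have rC : r = (lead_coef r)%:P.
  by rewrite /lead_coef sr /=; apply: size1_polyC; rewrite sr.
have lr : lead_coef r = sa.
  by rewrite -lq qr lead_coefM (eqP mp) mulr1.
rewrite -qE qr hornerM horner_prod rC lr hornerC prodl_big.
by apply: congr1; apply: eq_bigr => z _; rewrite hornerXsubC.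
Qed.
End MC.

Lemma loc_int a b x : a < x < b -> locally x (fun y => a < y < b).
Proof.
  intros H. apply (open_and (fun y => a < y) (fun y => y < b)).
  apply open_gt. apply open_lt. exact H.
Qed.

Fixpoint CI (a b : R) (k : nat) (f : R -> R) : Prop :=
  match k with
  | O => True
  | S k => (forall x, a < x < b -> ex_derive f x) /\ CI a b k (Derive f)
  end.

Definition SM a b f := forall k, CI a b k f.

Lemma CI_ext a b k : forall f g, (forall x, a < x < b -> f x = g x) -> CI a b k f -> CI a b k g.
Proof.
  induction k as [|k IH]; simpl; auto.
  intros f g E [H1 H2]. split.
  - intros x Hx. apply ex_derive_ext_loc with f; [|apply H1, Hx].
    apply filter_imp with (2 := loc_int a b x Hx). intros y Hy; apply E, Hy.
  - apply IH with (Derive f); auto. intros x Hx. apply Derive_ext_loc.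
    apply filter_imp with (2 := loc_int a b x Hx). intros y Hy; apply E, Hy.
Qed.

Lemma CI_mono a b k : forall f, CI a b (S k) f -> CI a b k f.
Proof.
  induction k as [|k IH]; simpl; auto.
  intros f [H1 H2]. split; auto.
Qed.

Lemma CI_mono_le a b k k' f : (k' <= k)%nat -> CI a b k f -> CI a b k' f.
Proof. intros Hle; induction Hle; intros H; auto. apply IHHle, CI_mono, H. Qed.

Lemma SM_ext a b f g : (forall x, a < x < b -> f x = g x) -> SM a b f -> SM a b g.
Proof. intros E H k. apply CI_ext with f; auto. Qed.

Lemma SM_D a b f : SM a b f -> SM a b (Derive f).
Proof. intros H k. exact (proj2 (H (S k))). Qed.

Lemma SM_ex a b f x : SM a b f -> a < x < b -> ex_derive f x.
Proof. intros H. exact (proj1 (H 1%nat) x). Qed.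

Lemma SM_Dn a b f j : SM a b f -> SM a b (Derive_n f j).
Proof.
  intros H. induction j as [|j IH]; simpl.
  - intros k; apply CI_ext with f; auto.
  - apply SM_D, IH.
Qed.

Lemma SM_exn a b f x : SM a b f -> a < x < b -> forall k, ex_derive_n f k x.
Proof.
  intros H Hx [|k]; simpl; auto. apply SM_ex with a b; auto. apply SM_Dn, H.
Qed.

Lemma SM_loc a b f x n : SM a b f -> a < x < b ->
  locally x (fun y => forall k, (k <= n)%nat -> ex_derive_n f k y).
Proof.
  intros H Hx. apply filter_imp with (2 := loc_int a b x Hx).
  intros y Hy k _. apply SM_exn with a b; auto.
Qed.

Lemma SM_sub a b a' b' f : a <= a' -> b' <= b -> SM a b f -> SM a' b' f.
Proof.
  intros Ha Hb H k. revert f H. induction k as [|k IH]; simpl; auto.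
  intros f H. split.
  - intros x Hx. apply SM_ex with a b; auto. lra.
  - apply IH, SM_D, H.
Qed.

Lemma CI_zero a b k : CI a b k (fun _ => 0).
Proof.
  induction k as [|k IH]; simpl; auto. split.
  - intros; apply ex_derive_const.
  - apply CI_ext with (fun _ => 0); auto. intros x _. rewrite Derive_const; auto.
Qed.

Lemma SM_const a b c : SM a b (fun _ => c).
Proof.
  intros [|k]; simpl; auto. split.
  - intros; apply ex_derive_const.
  - apply CI_ext with (fun _ => 0); [|apply CI_zero]. intros x _. rewrite Derive_const; auto.
Qed.

Lemma SM_id a b : SM a b (fun x => x).
Proof.
  intros [|k]; simpl; auto. split.
  - intros; apply ex_derive_id.
  - apply CI_ext with (fun _ => 1); [|apply SM_const]. intros x _. rewrite Derive_id; auto.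
Qed.

Lemma CI_plus a b k : forall f g, CI a b k f -> CI a b k g -> CI a b k (fun x => f x + g x).
Proof.
  induction k as [|k IH]; simpl; auto.
  intros f g [Hf1 Hf2] [Hg1 Hg2]. split.
  - intros x Hx. exact (ex_derive_plus f g x (Hf1 x Hx) (Hg1 x Hx)).
  - apply CI_ext with (fun x => Derive f x + Derive g x); auto.
    intros x Hx. rewrite Derive_plus; auto.
Qed.

Lemma CI_opp a b k : forall f, CI a b k f -> CI a b k (fun x => - f x).
Proof.
  induction k as [|k IH]; simpl; auto.
  intros f [Hf1 Hf2]. split.
  - intros x Hx. exact (ex_derive_opp f x (Hf1 x Hx)).
  - apply CI_ext with (fun x => - Derive f x); auto.
    intros x Hx. rewrite Derive_opp; auto.
Qed.

Lemma CI_mult a b k : forall f g, CI a b k f -> CI a b k g -> CI a b k (fun x => f x * g x).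
Proof.
  induction k as [|k IH]; simpl; auto.
  intros f g Hf Hg. pose proof (CI_mono a b k f Hf) as Hf0. pose proof (CI_mono a b k g Hg) as Hg0.
  destruct Hf as [Hf1 Hf2]; destruct Hg as [Hg1 Hg2]. split.
  - intros x Hx. exact (ex_derive_mult f g x (Hf1 x Hx) (Hg1 x Hx)).
  - apply CI_ext with (fun x => Derive f x * g x + f x * Derive g x).
    + intros x Hx. rewrite Derive_mult; auto.
    + apply CI_plus; apply IH; auto.
Qed.

Lemma CI_comp a b c d k : forall g f, CI c d k g -> CI a b k f ->
  (forall x, a < x < b -> c < f x < d) -> CI a b k (fun x => g (f x)).
Proof.
  induction k as [|k IH]; simpl; auto.
  intros g f Hg Hf Hm. pose proof (CI_mono a b k f Hf) as Hf0.
  destruct Hg as [Hg1 Hg2]; destruct Hf as [Hf1 Hf2]. split.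
  - intros x Hx. exact (ex_derive_comp g f x (Hg1 _ (Hm x Hx)) (Hf1 x Hx)).
  - apply CI_ext with (fun x => Derive f x * Derive g (f x)).
    + intros x Hx. rewrite (Derive_comp g f x (Hg1 _ (Hm x Hx)) (Hf1 x Hx)). reflexivity.
    + apply CI_mult; auto.
Qed.

Lemma CI_inv a b k : forall g, CI a b k g -> (forall x, a < x < b -> g x <> 0) ->
  CI a b k (fun x => / g x).
Proof.
  induction k as [|k IH]; simpl; auto.
  intros g Hg Hn. pose proof (CI_mono a b k g Hg) as Hg0.
  destruct Hg as [Hg1 Hg2]. split.
  - intros x Hx. exact (ex_derive_inv g x (Hg1 x Hx) (Hn x Hx)).
  - apply CI_ext with (fun x => - (Derive g x * (/ g x * / g x))).
    + intros x Hx. rewrite Derive_inv; auto. simpl. field. auto.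
    + apply CI_opp, CI_mult; auto. apply CI_mult; apply IH; auto.
Qed.

Lemma SM_plus a b f g : SM a b f -> SM a b g -> SM a b (fun x => f x + g x).
Proof. intros H1 H2 k; apply CI_plus; auto. Qed.
Lemma SM_opp a b f : SM a b f -> SM a b (fun x => - f x).
Proof. intros H1 k; apply CI_opp; auto. Qed.
Lemma SM_mult a b f g : SM a b f -> SM a b g -> SM a b (fun x => f x * g x).
Proof. intros H1 H2 k; apply CI_mult; auto. Qed.
Lemma SM_minus a b f g : SM a b f -> SM a b g -> SM a b (fun x => f x - g x).
Proof. intros H1 H2. apply SM_plus; auto. apply SM_opp; auto. Qed.
Lemma SM_comp a b c d g f : SM c d g -> SM a b f ->
  (forall x, a < x < b -> c < f x < d) -> SM a b (fun x => g (f x)).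
Proof. intros H1 H2 H3 k; apply CI_comp with c d; auto. Qed.
Lemma SM_inv a b g : SM a b g -> (forall x, a < x < b -> g x <> 0) -> SM a b (fun x => / g x).
Proof. intros H1 H2 k; apply CI_inv; auto. Qed.
Lemma SM_scal a b c f : SM a b f -> SM a b (fun x => c * f x).
Proof. intros H. apply SM_mult; auto. apply SM_const. Qed.
Lemma SM_pow a b f n : SM a b f -> SM a b (fun x => f x ^ n).
Proof.
  intros H. induction n as [|n IH]; simpl. apply SM_const. apply SM_mult; auto.
Qed.

Lemma SM_sincos a b : SM a b sin /\ SM a b cos.
Proof.
  assert (forall k, CI a b k sin /\ CI a b k cos).
  { induction k as [|k [IH1 IH2]]; simpl; auto. split; split.
    - intros x _. eexists; apply is_derive_sin.
    - apply CI_ext with cos; auto. intros x _. symmetry; apply is_derive_unique, is_derive_sin.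
    - intros x _. eexists; apply is_derive_cos.
    - apply CI_ext with (fun x => - sin x); auto. intros x _. symmetry; apply is_derive_unique, is_derive_cos.
      apply CI_opp; auto. }
  split; intros k; apply H.
Qed.

Lemma SM_sin a b : SM a b sin. Proof. apply SM_sincos. Qed.
Lemma SM_cos a b : SM a b cos. Proof. apply SM_sincos. Qed.

Lemma SM_atan a b : SM a b atan.
Proof.
  intros [|k]; simpl; auto. split.
  - intros x _. eexists; apply is_derive_atan.
  - apply CI_ext with (fun x => / (1 + x * x)).
    + intros x _. symmetry; apply is_derive_unique. apply is_derive_atan.
    + apply CI_inv. apply SM_plus. apply SM_const. apply SM_mult; apply SM_id.
      intros x _. assert (0 <= x * x) by nra. lra.
Qed.

Lemma SM_tan : SM (- (PI/2)) (PI/2) tan.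
Proof.
  apply SM_ext with (fun x => sin x * / cos x).
  - intros x _. reflexivity.
  - apply SM_mult. apply SM_sin. apply SM_inv. apply SM_cos.
    intros x Hx. apply Rgt_not_eq, cos_gt_0; lra.
Qed.

Lemma SM_sec : SM (- (PI/2)) (PI/2) (fun x => / cos x).
Proof.
  apply SM_inv. apply SM_cos. intros x Hx. apply Rgt_not_eq, cos_gt_0; lra.
Qed.

Lemma isd_eq (f : R -> R) (x l l' : R) : is_derive f x l -> l = l' -> is_derive f x l'.
Proof. intros H ->; exact H. Qed.
Lemma isd_plus (f g : R -> R) (x df dg : R) : is_derive f x df -> is_derive g x dg ->
  is_derive (fun y => f y + g y) x (df + dg).
Proof. intros H1 H2. exact (is_derive_plus f g x df dg H1 H2). Qed.
Lemma isd_minus (f g : R -> R) (x df dg : R) : is_derive f x df -> is_derive g x dg ->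
  is_derive (fun y => f y - g y) x (df - dg).
Proof. intros H1 H2. exact (is_derive_minus f g x df dg H1 H2). Qed.
Lemma isd_mult (f g : R -> R) (x df dg : R) : is_derive f x df -> is_derive g x dg ->
  is_derive (fun y => f y * g y) x (df * g x + f x * dg).
Proof. intros H1 H2. exact (is_derive_mult f g x df dg H1 H2 Rmult_comm). Qed.
Lemma isd_id (x : R) : is_derive (fun y => y) x 1.
Proof. exact (is_derive_id x). Qed.
Lemma isd_const (c x : R) : is_derive (fun _ => c) x 0.
Proof. exact (is_derive_const c x). Qed.
Lemma isd_comp (f g : R -> R) (x df dg : R) : is_derive f (g x) df -> is_derive g x dg ->
  is_derive (fun y => f (g y)) x (dg * df).
Proof. intros H1 H2. exact (is_derive_comp f g x df dg H1 H2). Qed.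
Lemma isd_inv (f : R -> R) (x df : R) : is_derive f x df -> f x <> 0 ->
  is_derive (fun y => / f y) x (- df / f x ^ 2).
Proof. intros H1 H2. exact (is_derive_inv f x df H1 H2). Qed.
Lemma isd_pow (f : R -> R) (n : nat) (x df : R) : is_derive f x df ->
  is_derive (fun y => f y ^ n) x (INR n * df * f x ^ Init.Nat.pred n).
Proof. intros H. exact (is_derive_pow f n x df H). Qed.

Lemma sum_shift (g : nat -> R) M : sum_f_R0 g (S M) = g O + sum_f_R0 (fun j => g (S j)) M.
Proof.
  induction M as [|M IH]; simpl in *. reflexivity. rewrite IH. ring.
Qed.

Lemma sum_S (g : nat -> R) M : sum_f_R0 g (S M) = sum_f_R0 g M + g (S M).
Proof. reflexivity. Qed.

Lemma Derive_sum (F : nat -> R -> R) M t :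
  (forall j, (j <= M)%nat -> ex_derive (F j) t) ->
  ex_derive (fun s => sum_f_R0 (fun j => F j s) M) t /\
  Derive (fun s => sum_f_R0 (fun j => F j s) M) t = sum_f_R0 (fun j => Derive (F j) t) M.
Proof.
  induction M as [|M IH]; intros H; simpl.
  - split; [apply H; lia | reflexivity].
  - destruct IH as [IH1 IH2]. intros j Hj; apply H; lia.
    assert (HM : ex_derive (F (S M)) t) by (apply H; lia).
    split.
    + exact (ex_derive_plus (fun s => sum_f_R0 (fun j => F j s) M) (F (S M)) t IH1 HM).
    + rewrite Derive_plus; [rewrite IH2; reflexivity | exact IH1 | exact HM].
Qed.

Lemma Derive_loc_sum (G : R -> R) (F : nat -> R -> R) M t a b : a < t < b ->
  (forall s, a < s < b -> G s = sum_f_R0 (fun j => F j s) M) ->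
  (forall j, (j <= M)%nat -> ex_derive (F j) t) ->
  Derive G t = sum_f_R0 (fun j => Derive (F j) t) M.
Proof.
  intros Ht HG HF. rewrite <- (proj2 (Derive_sum F M t HF)).
  apply Derive_ext_loc. apply filter_imp with (2 := loc_int a b t Ht). intros y Hy; apply HG, Hy.
Qed.

Fixpoint Bf (f : R -> R) (M j : nat) {struct M} : R -> R :=
  match M with
  | O => fun _ => match j with O => 1 | S _ => 0 end
  | S M => match j with
           | O => Derive (Bf f M O)
           | S j' => fun t => Derive (Bf f M (S j')) t + Derive f t * Bf f M j' t
           end
  end.

Section FdB.
Variables (a b c d : R) (f Phi : R -> R).
Hypothesis Hf : SM a b f.
Hypothesis HPhi : SM c d Phi.
Hypothesis Hm : forall x, a < x < b -> c < f x < d.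

Lemma Bf_SM M : forall j, SM a b (Bf f M j).
Proof.
  induction M as [|M IH]; intros [|j]; simpl.
  - apply SM_const.
  - apply SM_const.
  - apply SM_D, IH.
  - apply SM_plus. apply SM_D, IH. apply SM_mult. apply SM_D, Hf. apply IH.
Qed.

Lemma Bf_zero M : forall j t, (M < j)%nat -> Bf f M j t = 0.
Proof.
  induction M as [|M IH]; intros [|j] t Hj; simpl; try lia; auto.
  rewrite (IH j t) by lia. rewrite Rmult_0_r, Rplus_0_r.
  rewrite (Derive_ext _ (fun _ => 0)). apply Derive_const.
  intros s; apply IH; lia.
Qed.

Lemma Bf_S0 M : forall t, Bf f (S M) O t = 0.
Proof.
  induction M as [|M IH]; intros t; simpl.
  - apply Derive_const.
  - rewrite (Derive_ext _ (fun _ => 0)). apply Derive_const. exact IH.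
Qed.

Lemma term_derive g j t : SM a b g -> a < t < b ->
  ex_derive (fun s => Derive_n Phi j (f s) * g s) t /\
  Derive (fun s => Derive_n Phi j (f s) * g s) t =
    Derive f t * Derive_n Phi (S j) (f t) * g t + Derive_n Phi j (f t) * Derive g t.
Proof.
  intros Hg Ht.
  assert (E1 : ex_derive (Derive_n Phi j) (f t)) by (apply SM_ex with c d; auto; apply SM_Dn, HPhi).
  assert (E2 : ex_derive f t) by (apply SM_ex with a b; auto).
  assert (E3 : ex_derive (fun s => Derive_n Phi j (f s)) t) by exact (ex_derive_comp _ f t E1 E2).
  assert (E4 : ex_derive g t) by (apply SM_ex with a b; auto).
  split.
  - exact (ex_derive_mult _ g t E3 E4).
  - rewrite (Derive_mult _ g t E3 E4).
    f_equal. f_equal. exact (Derive_comp (Derive_n Phi j) f t E1 E2).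
Qed.

Lemma FdB1 M : forall t, a < t < b ->
  Derive_n (fun s => Phi (f s)) M t = sum_f_R0 (fun j => Derive_n Phi j (f t) * Bf f M j t) M.
Proof.
  induction M as [|M IH]; intros t Ht.
  - simpl. ring.
  - simpl Derive_n at 1.
    rewrite (Derive_loc_sum _ (fun j s => Derive_n Phi j (f s) * Bf f M j s) M t a b Ht).
    2: { intros y Hy; apply IH, Hy. }
    2: { intros j _. apply term_derive; auto. apply Bf_SM. }
    rewrite (sum_eq _ (fun j => Derive f t * Derive_n Phi (S j) (f t) * Bf f M j t
                              + Derive_n Phi j (f t) * Derive (Bf f M j) t)).
    2: { intros j _. apply term_derive; auto. apply Bf_SM. }
    rewrite plus_sum.
    rewrite sum_shift. simpl Bf at 1.
    rewrite (sum_eq (fun j => Derive_n Phi (S j) (f t) * Bf f (S M) (S j) t)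
                    (fun j => Derive_n Phi (S j) (f t) * Derive (Bf f M (S j)) t
                            + Derive f t * Derive_n Phi (S j) (f t) * Bf f M j t)).
    2: { intros j _. simpl. ring. }
    rewrite plus_sum.
    assert (Z : Derive (Bf f M (S M)) t = 0).
    { rewrite (Derive_ext _ (fun _ => 0)). apply Derive_const. intros s; apply Bf_zero; lia. }
    destruct M as [|M].
    + simpl. rewrite (Derive_const 0). ring.
    + rewrite (sum_shift (fun j => Derive_n Phi j (f t) * Derive (Bf f (S M) j) t)).
      rewrite (sum_S (fun j => Derive_n Phi (S j) (f t) * Derive (Bf f (S M) (S j)) t) M).
      rewrite Z. change (Bf f (S (S M)) 0 t) with (Derive (Bf f (S M) 0) t). ring.
Qed.

Lemma FdB2 M : forall t, a < t < b ->
  Derive_n (fun s => Derive f s * Phi (f s)) M t =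
    sum_f_R0 (fun j => Derive_n Phi j (f t) * Bf f (S M) (S j) t) M.
Proof.
  induction M as [|M IH]; intros t Ht.
  - simpl. rewrite Derive_const. ring.
  - simpl Derive_n at 1.
    rewrite (Derive_loc_sum _ (fun j s => Derive_n Phi j (f s) * Bf f (S M) (S j) s) M t a b Ht).
    2: { intros y Hy; apply IH, Hy. }
    2: { intros j _. apply term_derive; auto. apply Bf_SM. }
    rewrite (sum_eq _ (fun j => Derive f t * Derive_n Phi (S j) (f t) * Bf f (S M) (S j) t
                              + Derive_n Phi j (f t) * Derive (Bf f (S M) (S j)) t)).
    2: { intros j _. apply term_derive; auto. apply Bf_SM. }
    rewrite plus_sum.
    rewrite (sum_eq (fun j => Derive_n Phi j (f t) * Bf f (S (S M)) (S j) t)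
                    (fun j => Derive_n Phi j (f t) * Derive (Bf f (S M) (S j)) t
                            + Derive f t * Derive_n Phi j (f t) * Bf f (S M) j t)).
    2: { intros j _. simpl. ring. }
    rewrite plus_sum.
    assert (Z : Derive (Bf f (S M) (S (S M))) t = 0).
    { rewrite (Derive_ext _ (fun _ => 0)). apply Derive_const. intros s; apply Bf_zero; lia. }
    rewrite (sum_S (fun j => Derive_n Phi j (f t) * Derive (Bf f (S M) (S j)) t) M).
    rewrite Z.
    rewrite (sum_shift (fun j => Derive f t * Derive_n Phi j (f t) * Bf f (S M) j t)).
    rewrite Bf_S0. ring.
Qed.

End FdB.

Lemma is_derive_eq (f : R -> R) x l l' : is_derive f x l -> l = l' -> is_derive f x l'.
Proof. intros H ->; exact H. Qed.

Lemma atan_maps x : - (PI/2) < atan x < PI/2.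
Proof. pose proof (atan_bound x). lra. Qed.

Lemma Dn_mono_at0 (i j : nat) :
  Derive_n (fun u => u ^ i / INR (fact i)) j 0 = if Nat.eqb j i then 1 else 0.
Proof.
  rewrite (Derive_n_ext _ (fun u => / INR (fact i) * u ^ i)).
  2: { intros t; unfold Rdiv; ring. }
  rewrite Derive_n_scal_l, Derive_n_pow.
  destruct (Compare_dec.le_dec j i) as [Hle|Hgt].
  - destruct (Nat.eqb_spec j i) as [->|Hne].
    + rewrite Nat.sub_diag. simpl. field. apply INR_fact_neq_0.
    + rewrite pow_i by lia. ring.
  - destruct (Nat.eqb_spec j i) as [->|Hne]; [lia|]. ring.
Qed.

Lemma sum_delta (X : nat -> R) i M :
  sum_f_R0 (fun j => (if Nat.eqb j i then 1 else 0) * X j) M = if Nat.leb i M then X i else 0.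
Proof.
  induction M as [|M IH].
  - simpl. destruct i; simpl; ring.
  - rewrite sum_S, IH. destruct (Nat.eqb_spec (S M) i) as [<-|Hne].
    + rewrite (proj2 (Nat.leb_nle (S M) M)) by lia. rewrite Nat.leb_refl. ring.
    + destruct (Nat.leb_spec i M); destruct (Nat.leb_spec i (S M)); try lia; ring.
Qed.

Lemma SM_mono_fun a b i : SM a b (fun u => u ^ i / INR (fact i)).
Proof.
  apply SM_ext with (fun u => u ^ i * / INR (fact i)). intros; reflexivity.
  apply SM_mult. apply SM_pow, SM_id. apply SM_const.
Qed.

Lemma arctanA_Bf M i : arctanA M i = Bf atan M i 0.
Proof.
  unfold arctanA.
  rewrite (FdB1 (-1) 1 (- (PI/2)) (PI/2) atan (fun u => u ^ i / INR (fact i))); try lra.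
  - rewrite (sum_eq _ (fun j => (if Nat.eqb j i then 1 else 0) * Bf atan M j 0)).
    2: { intros j _. rewrite atan_0, Dn_mono_at0. reflexivity. }
    rewrite sum_delta. destruct (Nat.leb_spec i M). reflexivity.
    symmetry; apply Bf_zero; lia.
  - apply SM_atan.
  - apply SM_mono_fun.
  - intros x _; apply atan_maps.
Qed.

Lemma tangentT_even q : tangentT (2 * q) = 0.
Proof.
  unfold tangentT.
  assert (H := Derive_n_comp_scal tan (-1) (2 * q) 0).
  rewrite Rmult_0_r in H.
  rewrite (Derive_n_ext _ (fun y => - tan y)) in H.
  2: { intros y. replace (-1 * y) with (- y) by ring. apply tan_neg. }
  rewrite Derive_n_opp in H.
  rewrite pow_1_even in H.
  assert (L : locally 0 (fun x => forall k, (k <= 2 * q)%nat -> ex_derive_n tan k x)).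
  { apply SM_loc with (- (PI/2)) (PI/2). apply SM_tan. pose proof PI2_RGT_0; lra. }
  specialize (H L). lra.
Qed.

Definition U (k : nat) (s t : R) : R := cos (atan t) ^ k * sin (INR k * atan t + s).

Lemma cos_atan2 t : cos (atan t) ^ 2 = / (1 + t²).
Proof.
  rewrite cos_atan. assert (H : 0 < 1 + t²) by (pose proof (Rle_0_sqr t); lra).
  pose proof (sqrt_lt_R0 _ H). unfold Rdiv.
  replace ((1 * / sqrt (1 + t²)) ^ 2) with (/ (sqrt (1 + t²) * sqrt (1 + t²))).
  rewrite sqrt_sqrt; lra. field. lra.
Qed.

Lemma pm_R (a b c d : R) : plus (mult a b) (mult c d) = a * b + c * d.
Proof. reflexivity. Qed.

Lemma is_derive_U k s t :
  is_derive (U (S k) s) t (INR (S k) * U (S (S k)) (s + PI/2) t).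
Proof.
  unfold U.
  set (K := INR (S k)).
  assert (Ha := is_derive_atan t).
  assert (Hc : is_derive (fun t => cos (atan t)) t (/ (1 + t²) * - sin (atan t))).
  { exact (is_derive_comp cos atan t _ _ (is_derive_cos (atan t)) Ha). }
  assert (Hc2 : is_derive (fun t => cos (atan t) ^ S k) t
                 (INR (S k) * (/ (1 + t²) * - sin (atan t)) * cos (atan t) ^ k)).
  { exact (is_derive_pow (fun t => cos (atan t)) (S k) t _ Hc). }
  assert (Hl : is_derive (fun t => K * atan t + s) t (K * / (1 + t²))).
  { eapply is_derive_eq.
    apply (is_derive_plus (fun t => K * atan t) (fun _ => s)).
    apply (is_derive_scal atan). exact Ha. apply is_derive_const.
    rewrite plus_zero_r. reflexivity. }
  assert (Hs : is_derive (fun t => sin (K * atan t + s)) t (K * / (1 + t²) * cos (K * atan t + s))).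
  { exact (is_derive_comp sin (fun t => K * atan t + s) t _ _ (is_derive_sin _) Hl). }
  eapply is_derive_eq.
  apply (is_derive_mult (fun t => cos (atan t) ^ S k) (fun t => sin (K * atan t + s)));
    [exact Hc2 | exact Hs | intros; apply Rmult_comm].
  rewrite pm_R.
  replace (INR (S (S k)) * atan t + (s + PI / 2)) with (PI/2 + ((K * atan t + s) + atan t))
    by (unfold K; rewrite (S_INR (S k)); ring).
  rewrite <- cos_sin, (cos_plus (K * atan t + s) (atan t)).
  rewrite <- cos_atan2. fold K. match goal with |- ?a = ?b => change (@eq R a b) end. simpl. ring.
Qed.

Lemma Derive_U k s : forall t, Derive (U (S k) s) t = INR (S k) * U (S (S k)) (s + PI/2) t.
Proof. intros t. apply is_derive_unique, is_derive_U. Qed.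

Lemma Dn_U M : forall k s t,
  Derive_n (U (S k) s) M t * INR (fact k) = INR (fact (k + M)) * U (S k + M) (s + INR M * (PI/2)) t.
Proof.
  induction M as [|M IH]; intros k s t.
  - simpl. rewrite Nat.add_0_r. replace (s + 0 * (PI/2)) with s by ring. ring.
  - replace (S M) with (M + 1)%nat by lia.
    rewrite <- Derive_n_comp.
    rewrite (Derive_n_ext _ (fun t => INR (S k) * U (S (S k)) (s + PI/2) t)).
    2: { intros y. simpl. apply Derive_U. }
    rewrite Derive_n_scal_l.
    specialize (IH (S k) (s + PI/2) t).
    rewrite fact_simpl, mult_INR in IH.
    replace (k + (M + 1))%nat with (S k + M)%nat by lia.
    replace (S k + (M + 1))%nat with (S (S k) + M)%nat by lia.
    replace (s + INR (M + 1) * (PI / 2)) with (s + PI / 2 + INR M * (PI / 2))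
      by (rewrite plus_INR; simpl; ring).
    rewrite <- IH. ring.
Qed.

Lemma U_at0 k s : U k s 0 = sin s.
Proof. unfold U. rewrite atan_0, cos_0, pow1. rewrite Rmult_0_r, Rplus_0_l. ring. Qed.

Lemma Dn_U10 M : Derive_n (U 1 0) M 0 = INR (fact M) * sin (INR M * (PI/2)).
Proof.
  pose proof (Dn_U M 0 0 0) as H. simpl in H. rewrite U_at0 in H.
  rewrite Rplus_0_l in H. rewrite Rmult_1_r in H. exact H.
Qed.

Lemma sin_odd q : sin (INR (2 * q + 1) * (PI/2)) = (-1) ^ q.
Proof.
  induction q as [|q IH].
  - simpl. replace (1 * (PI/2)) with (PI/2) by ring. apply sin_PI2.
  - replace (INR (2 * S q + 1) * (PI / 2)) with (INR (2 * q + 1) * (PI / 2) + PI)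
      by (rewrite !plus_INR, !mult_INR, !S_INR; simpl; field).
    rewrite neg_sin, IH. simpl. ring.
Qed.

Lemma sin_even q : sin (INR (2 * q) * (PI/2)) = 0.
Proof.
  induction q as [|q IH].
  - simpl. rewrite Rmult_0_l. apply sin_0.
  - replace (INR (2 * S q) * (PI / 2)) with (INR (2 * q) * (PI / 2) + PI)
      by (rewrite !mult_INR, !S_INR; simpl; field).
    rewrite neg_sin, IH. ring.
Qed.


Lemma is_derive_frac (x c t : R) j : 1 - x * t <> 0 ->
  is_derive (fun s => c / (1 - x * s) ^ S j) t (c * INR (S j) * x / (1 - x * t) ^ S (S j)).
Proof.
  intros H.
  eapply isd_eq.
  apply (isd_mult (fun _ => c) (fun s => / (1 - x * s) ^ S j)). apply isd_const.
  apply (isd_inv (fun s => (1 - x * s) ^ S j)).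
  apply (isd_pow (fun s => 1 - x * s)).
  apply (isd_minus (fun _ => 1) (fun s => x * s)). apply isd_const.
  eapply isd_eq. apply (isd_mult (fun _ => x) (fun s => s)). apply isd_const. apply isd_id.
  reflexivity. apply pow_nonzero; exact H.
  simpl pow. field. split; auto. apply pow_nonzero; exact H.
Qed.

Section PS.
Variables (x : nat -> R) (K : nat) (a b : R).
Hypothesis Hnz : forall k s, (k <= K)%nat -> a < s < b -> 1 - x k * s <> 0.

Definition hsum (t : R) := sum_f_R0 (fun k => x k / (1 - x k * t)) K.

Lemma Dn_hsum j : forall t, a < t < b ->
  Derive_n hsum j t = sum_f_R0 (fun k => INR (fact j) * x k ^ S j / (1 - x k * t) ^ S j) K.
Proof.
  induction j as [|j IH]; intros t Ht.
  - simpl. unfold hsum. apply sum_eq. intros k Hk. simpl. rewrite !Rmult_1_r, Rmult_1_l. reflexivity.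
  - simpl Derive_n at 1.
    rewrite (Derive_loc_sum _ (fun k s => INR (fact j) * x k ^ S j / (1 - x k * s) ^ S j) K t a b Ht).
    + apply sum_eq. intros k Hk.
      transitivity (INR (fact j) * x k ^ S j * INR (S j) * x k / (1 - x k * t) ^ S (S j)).
      apply is_derive_unique. apply is_derive_frac. apply Hnz; auto.
      rewrite fact_simpl, mult_INR. simpl pow. field; repeat split; try apply pow_nonzero; apply Hnz; auto.
    + intros s Hs. apply IH, Hs.
    + intros k Hk. eexists. apply is_derive_frac. apply Hnz; auto.
Qed.

Lemma Dn_hsum0 j : a < 0 < b ->
  Derive_n hsum j 0 = INR (fact j) * sum_f_R0 (fun k => x k ^ S j) K.
Proof.
  intros H0. rewrite Dn_hsum by auto. rewrite scal_sum. apply sum_eq. intros k _.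
  rewrite Rmult_0_r, Rminus_0_r, pow1. field.
Qed.

Lemma SM_hsum : SM a b hsum.
Proof.
  unfold hsum.
  assert (G : forall K', (K' <= K)%nat -> SM a b (fun t => sum_f_R0 (fun k => x k / (1 - x k * t)) K')).
  { induction K' as [|K' IH]; intros HK; simpl.
    - apply SM_mult. apply SM_const. apply SM_inv. apply SM_minus. apply SM_const.
      apply SM_mult. apply SM_const. apply SM_id. intros s Hs; apply Hnz; auto; lia.
    - apply SM_plus. apply IH; lia. apply SM_mult. apply SM_const. apply SM_inv. apply SM_minus. apply SM_const.
      apply SM_mult. apply SM_const. apply SM_id. intros s Hs; apply Hnz; auto. }
  apply G; lia.
Qed.
End PS.

Lemma PAB_trig j phi : sin phi <> 0 ->
  fst (PAB j (cot phi)) * sin phi ^ j = cos (INR j * phi) /\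
  snd (PAB j (cot phi)) * sin phi ^ j = sin (INR j * phi).
Proof.
  intros Hs. induction j as [|j [IH1 IH2]].
  - simpl. rewrite Rmult_0_l, cos_0, sin_0. split; ring.
  - simpl PAB. cbn [fst snd].
    replace (INR (S j) * phi) with (INR j * phi + phi) by (rewrite S_INR; ring).
    rewrite cos_plus, sin_plus. unfold cot in *. simpl pow.
    split.
    + rewrite <- IH1, <- IH2. field. exact Hs.
    + rewrite <- IH1, <- IH2. field. exact Hs.
Qed.

Lemma PAB_S j y : PAB (S j) y = (y * fst (PAB j y) - snd (PAB j y), fst (PAB j y) + y * snd (PAB j y)).
Proof. reflexivity. Qed.

Lemma PAB_derive j y :
  is_derive (fun y => fst (PAB (S j) y)) y (INR (S j) * fst (PAB j y)) /\
  is_derive (fun y => snd (PAB (S j) y)) y (INR (S j) * snd (PAB j y)).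
Proof.
  revert y. induction j as [|j IH]; intros y.
  - split.
    + eapply isd_eq.
      exact (isd_minus (fun y => y * 1) (fun _ => 0) y _ _
               (isd_mult (fun y => y) (fun _ => 1) y _ _ (isd_id y) (isd_const 1 y)) (isd_const 0 y)).
      simpl. ring.
    + eapply isd_eq.
      exact (isd_plus (fun _ => 1) (fun y => y * 0) y _ _ (isd_const 1 y)
               (isd_mult (fun y => y) (fun _ => 0) y _ _ (isd_id y) (isd_const 0 y))).
      simpl. ring.
  - destruct (IH y) as [IH1 IH2]. split.
    + eapply isd_eq.
      exact (isd_minus (fun y => y * fst (PAB (S j) y)) (fun y => snd (PAB (S j) y)) y _ _
               (isd_mult (fun y => y) (fun y => fst (PAB (S j) y)) y _ _ (isd_id y) IH1) IH2).
      rewrite !PAB_S. cbn [fst snd]. rewrite !S_INR. ring.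
    + eapply isd_eq.
      exact (isd_plus (fun y => fst (PAB (S j) y)) (fun y => y * snd (PAB (S j) y)) y _ _ IH1
               (isd_mult (fun y => y) (fun y => snd (PAB (S j) y)) y _ _ (isd_id y) IH2)).
      rewrite !PAB_S. cbn [fst snd]. rewrite !S_INR. ring.
Qed.

Fixpoint suml (l : list R) : R := match l with nil => 0 | x :: l => x + suml l end.

Lemma suml_app l1 l2 : suml (l1 ++ l2) = suml l1 + suml l2.
Proof. induction l1; simpl; [ring | rewrite IHl1; ring]. Qed.

Lemma suml_seq (G : nat -> R) m : suml (map G (seq 0 (S m))) = sum_f_R0 G m.
Proof.
  induction m as [|m IH]. simpl; ring.
  rewrite seq_S, map_app, suml_app, IH. simpl. ring.
Qed.

Lemma prodl_derive (xs : list R) y : (forall r, In r xs -> y - r <> 0) ->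
  is_derive (fun y => prodl (map (fun r => y - r) xs)) y
    (prodl (map (fun r => y - r) xs) * suml (map (fun r => / (y - r)) xs)).
Proof.
  induction xs as [|r xs IH]; intros H; simpl.
  - eapply isd_eq. apply isd_const. ring.
  - eapply isd_eq.
    apply (isd_mult (fun y => y - r) (fun y => prodl (map (fun r => y - r) xs))).
    apply (isd_minus (fun y => y) (fun _ => r)). apply isd_id. apply isd_const.
    apply IH. intros; apply H; right; auto.
    field. apply H; left; auto.
Qed.

Lemma sin_kPI k : sin (INR k * PI) = 0.
Proof.
  induction k as [|k IH]. simpl. rewrite Rmult_0_l; apply sin_0.
  rewrite S_INR, Rmult_plus_distr_r, Rmult_1_l, neg_sin, IH. ring.
Qed.

Lemma cot_diff p t : sin p <> 0 -> sin t <> 0 ->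
  cot p - cot t = sin (t - p) / (sin p * sin t).
Proof. intros H1 H2. unfold cot. rewrite sin_minus. field. auto. Qed.

Lemma cot_shift_term p t : sin p <> 0 -> sin t <> 0 -> sin (t - p) <> 0 ->
  cot (t - p) = - cot p + (1 + cot p ^ 2) / (cot p - cot t).
Proof.
  intros H1 H2 H3. rewrite cot_diff by auto. unfold cot.
  rewrite sin_minus, cos_minus. rewrite sin_minus in H3.
  assert (E := sin2_cos2 p). unfold Rsqr in E.
  field_simplify_eq. 2: { repeat split; auto. }
  replace (sin p ^ 2) with (1 - cos p ^ 2) by (simpl; lra). ring.
Qed.

Lemma cot_sum (n : nat) (b : R) : (1 <= n)%nat -> 0 < b -> b < PI / INR n ->
  sum_f_R0 (fun k => cot (b + INR k * PI / INR n)) (n - 1) = INR n * cot (INR n * b).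
Proof.
  intros Hn Hb0 Hb1.
  set (N := INR n) in *.
  assert (HN : 1 <= N) by (apply (le_INR 1 n) in Hn; simpl in Hn; exact Hn).
  assert (HPI := PI_RGT_0).
  assert (HNb : 0 < N * b < PI).
  { split. apply Rmult_lt_0_compat; lra.
    apply Rmult_lt_compat_l with (r := N) in Hb1; [|lra].
    fold N in Hb1. replace (N * (PI / N)) with PI in Hb1 by (field; lra). exact Hb1. }
  set (al := (N * b + PI) / 2).
  set (p0 := (PI / N - b) / 2).
  set (th := fun k : nat => (al + INR k * PI) / N).
  set (xk := fun k => cot (th k)).
  set (xs := map xk (seq 0 n)).
  assert (Hk : forall k, In k (seq 0 n) -> INR k <= N - 1).
  { intros k Hk. apply in_seq in Hk. assert (k <= n - 1)%nat by lia.
    apply le_INR in H. rewrite minus_INR in H by lia. simpl in H. exact H. }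
  assert (Hth : forall k, In k (seq 0 n) -> 0 < th k < PI).
  { intros k Hk'. specialize (Hk k Hk'). assert (0 <= INR k) by apply pos_INR.
    unfold th, al. split.
    - apply Rdiv_lt_0_compat; [|lra]. nra.
    - apply Rmult_lt_reg_r with N; [lra|]. unfold Rdiv. rewrite Rmult_assoc, Rinv_l, Rmult_1_r by lra. nra. }
  assert (Hsth : forall k, In k (seq 0 n) -> sin (th k) <> 0).
  { intros k Hk'. apply Rgt_not_eq, sin_gt_0; apply Hth; auto. }
  assert (Hp0 : 0 < p0 < PI / 2).
  { unfold p0. split. lra.
    assert (PI / N <= PI) by (unfold Rdiv; apply Rmult_le_reg_r with N; [lra|];
      rewrite Rmult_assoc, Rinv_l, Rmult_1_r by lra; nra). lra. }
  assert (Hsp0 : sin p0 <> 0) by (apply Rgt_not_eq, sin_gt_0; lra).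
  assert (Hdiff : forall k, th k - p0 = b + INR k * PI / N).
  { intros k. unfold th, al, p0. field. lra. }
  assert (Hsd : forall k, In k (seq 0 n) -> 0 < sin (th k - p0)).
  { intros k Hk'. specialize (Hk k Hk'). assert (0 <= INR k) by apply pos_INR.
    rewrite Hdiff. apply sin_gt_0.
    - assert (0 <= INR k * PI / N). { apply Rdiv_le_0_compat; nra. } lra.
    - assert (INR k * PI / N <= (N - 1) * PI / N).
      { unfold Rdiv. apply Rmult_le_compat_r. apply Rlt_le, Rinv_0_lt_compat; lra. nra. }
      replace ((N - 1) * PI / N) with (PI - PI / N) in H0 by (field; lra). lra. }
  set (Q := fun y => sin al * fst (PAB n y) - cos al * snd (PAB n y)).
  assert (Qtrig : forall phi, sin phi <> 0 -> Q (cot phi) * sin phi ^ n = sin (al - N * phi)).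
  { intros phi Hs. destruct (PAB_trig n phi Hs) as [E1 E2]. fold N in E1, E2. unfold Q.
    rewrite sin_minus. rewrite <- E1, <- E2. ring. }
  assert (Hroots : forall x, In x xs -> Q x = 0).
  { intros x Hx. unfold xs in Hx. apply in_map_iff in Hx. destruct Hx as [k [<- Hk']].
    specialize (Qtrig (th k) (Hsth k Hk')).
    replace (al - N * th k) with (- (INR k * PI)) in Qtrig by (unfold th; field; lra).
    rewrite sin_neg, sin_kPI, Ropp_0 in Qtrig.
    apply Rmult_integral in Qtrig. destruct Qtrig as [|Hz]; auto.
    exfalso. exact (pow_nonzero _ n (Hsth k Hk') Hz). }
  assert (Hnd : NoDup xs).
  { unfold xs. apply NoDup_map_NoDup_ForallPairs; [|apply seq_NoDup].
    assert (Hlt : forall i j, In i (seq 0 n) -> In j (seq 0 n) -> (i < j)%nat -> xk i <> xk j).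
    { intros i j Hi Hj Hij Heq. unfold xk in Heq.
      assert (E : cot (th i) - cot (th j) = 0) by lra.
      rewrite cot_diff in E by (apply Hsth; auto).
      assert (Hs : 0 < sin (th j - th i)).
      { apply sin_gt_0.
        - unfold th. apply lt_INR in Hij.
          replace ((al + INR j * PI) / N - (al + INR i * PI) / N) with ((INR j - INR i) * PI / N) by (field; lra).
          apply Rdiv_lt_0_compat; [|lra]. nra.
        - pose proof (Hth i Hi). pose proof (Hth j Hj). lra. }
      unfold Rdiv in E. apply Rmult_integral in E. destruct E as [E|E]. lra.
      revert E. apply Rinv_neq_0_compat. apply Rmult_integral_contrapositive; split; apply Hsth; auto. }
    intros i j Hi Hj Heq.
    destruct (Nat.lt_trichotomy i j) as [H|[H|H]]; auto.
    - exfalso; exact (Hlt i j Hi Hj H Heq).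
    - exfalso; exact (Hlt j i Hj Hi H (eq_sym Heq)). }
  assert (Hlen : length xs = n) by (unfold xs; rewrite length_map, length_seq; reflexivity).
  assert (Hsal : sin al <> 0) by (apply Rgt_not_eq, sin_gt_0; unfold al; lra).
  assert (Hfac := MC.factor_Q n (sin al) (cos al) xs Hsal Hlen Hnd Hroots).
  set (y0 := cot p0).
  assert (Hy0 : forall r, In r xs -> y0 - r <> 0).
  { intros r Hr. unfold xs in Hr. apply in_map_iff in Hr. destruct Hr as [k [<- Hk']].
    unfold y0, xk. rewrite cot_diff by (auto; apply Hsth; auto).
    specialize (Hsd k Hk'). specialize (Hsth k Hk').
    unfold Rdiv. apply Rmult_integral_contrapositive; split. lra.
    apply Rinv_neq_0_compat. apply Rmult_integral_contrapositive; split; auto. }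
  (* derivative of Q at y0 in two ways *)
  destruct n as [|m]; [lia|].
  assert (D1 : is_derive Q y0 (sin al * (N * fst (PAB m y0)) - cos al * (N * snd (PAB m y0)))).
  { destruct (PAB_derive m y0) as [Da Db]. unfold Q.
    eapply isd_eq.
    apply (isd_minus (fun y => sin al * fst (PAB (S m) y)) (fun y => cos al * snd (PAB (S m) y))).
    apply (isd_mult (fun _ => sin al) (fun y => fst (PAB (S m) y))). apply isd_const. exact Da.
    apply (isd_mult (fun _ => cos al) (fun y => snd (PAB (S m) y))). apply isd_const. exact Db.
    unfold N. ring. }
  assert (D2 : is_derive Q y0 (sin al * (prodl (map (fun r => y0 - r) xs) * suml (map (fun r => / (y0 - r)) xs)))).
  { apply is_derive_ext with (fun y => sin al * prodl (map (fun r => y - r) xs)).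
    intros y. symmetry. apply Hfac.
    eapply isd_eq.
    apply (isd_mult (fun _ => sin al) (fun y => prodl (map (fun r => y - r) xs))). apply isd_const.
    apply prodl_derive. exact Hy0. ring. }
  assert (Deq := is_derive_unique _ _ _ D2). rewrite (is_derive_unique _ _ _ D1) in Deq.
  set (P0 := prodl (map (fun r => y0 - r) xs)) in *.
  set (S0 := suml (map (fun r => / (y0 - r)) xs)) in *.
  assert (HQ0 : Q y0 * sin p0 ^ S m = sin (N * b)).
  { unfold y0. rewrite Qtrig by auto. f_equal. unfold al, p0. field. lra. }
  assert (HQ1 : (sin al * fst (PAB m y0) - cos al * snd (PAB m y0)) * sin p0 ^ m = sin (N * b + p0)).
  { destruct (PAB_trig m p0 Hsp0) as [E1 E2]. unfold y0.
    replace ((sin al * fst (PAB m (cot p0)) - cos al * snd (PAB m (cot p0))) * sin p0 ^ m)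
      with (sin al * (fst (PAB m (cot p0)) * sin p0 ^ m) - cos al * (snd (PAB m (cot p0)) * sin p0 ^ m)) by ring.
    rewrite E1, E2, <- sin_minus. f_equal. unfold al, p0, N. rewrite S_INR. field. pose proof (pos_INR m); lra. }
  assert (HQP : Q y0 = sin al * P0) by (unfold P0; apply Hfac).
  assert (HsNb : sin (N * b) <> 0) by (apply Rgt_not_eq, sin_gt_0; lra).
  assert (HS0 : S0 = N * sin p0 * sin (N * b + p0) / sin (N * b)).
  { assert (HP0 : sin al * P0 <> 0).
    { rewrite <- HQP. intros Hz. rewrite Hz, Rmult_0_l in HQ0. lra. }
    assert (E : sin al * P0 * S0 = N * (sin al * fst (PAB m y0) - cos al * snd (PAB m y0))).
    { replace (sin al * P0 * S0) with (sin al * (P0 * S0)) by ring. rewrite <- Deq. ring. }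
    apply Rmult_eq_reg_l with (sin al * P0); auto.
    rewrite E. rewrite <- HQP. rewrite <- HQ0, <- HQ1. simpl pow. field.
    repeat split; auto. apply pow_nonzero; auto. rewrite HQP; auto. }
  replace (S m - 1)%nat with m by lia.
  rewrite (sum_eq _ (fun k => - y0 + (1 + y0 ^ 2) * / (y0 - xk k))).
  2: { intros k Hk'. assert (Hin : In k (seq 0 (S m))) by (apply in_seq; lia).
       rewrite <- Hdiff. unfold y0, xk.
       rewrite cot_shift_term; [unfold Rdiv; reflexivity | auto | apply Hsth; auto | apply Rgt_not_eq, Hsd, Hin]. }
  rewrite <- suml_seq.
  assert (ES : forall l, suml (map (fun k => - y0 + (1 + y0 ^ 2) * / (y0 - xk k)) l)
             = INR (length l) * - y0 + (1 + y0 ^ 2) * suml (map (fun r => / (y0 - r)) (map xk l))).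
  { intros l. induction l as [|k l IH]; cbn [map suml length]. simpl INR. ring.
    rewrite IH. rewrite S_INR. ring. }
  rewrite ES, length_seq. fold xs. fold S0. rewrite HS0. fold N.
  unfold y0, cot. rewrite sin_plus. assert (E := sin2_cos2 p0). unfold Rsqr in E. field_simplify_eq; [|split; auto].
  transitivity (N*cos p0 * sin(N * b)*(cos p0^2 + sin p0^2 - 1) + N*sin p0*cos(N * b)*(cos p0^2+sin p0^2)). ring.
  replace (cos p0 ^2 + sin p0^2) with 1 by (simpl; lra). ring.
Qed.

Lemma term_identity th psi : sin th <> 0 -> cos psi <> 0 -> sin (th - psi) <> 0 ->
  cot th / (1 - cot th * tan psi) = cos psi ^ 2 * cot (th - psi) - sin psi * cos psi.
Proof.
  intros H1 H2 H3. unfold cot, tan. rewrite sin_minus, cos_minus in *.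
  assert (E := sin2_cos2 psi). unfold Rsqr in E.
  assert (H4 : 1 - cos th / sin th * (sin psi / cos psi) = (sin th * cos psi - cos th * sin psi) / (sin th * cos psi))
    by (field; auto).
  rewrite H4. field_simplify_eq; [|repeat split; auto].
  transitivity (cos psi * cos th * (cos psi ^ 2 + sin psi ^ 2)). 2: ring.
  replace (cos psi ^ 2 + sin psi ^ 2) with 1 by (simpl; lra). ring.
Qed.

Lemma one_minus_nz th psi : sin th <> 0 -> cos psi <> 0 -> sin (th - psi) <> 0 ->
  1 - cot th * tan psi <> 0.
Proof.
  intros H1 H2 H3. unfold cot, tan. rewrite sin_minus in H3.
  replace (1 - cos th / sin th * (sin psi / cos psi)) with ((sin th * cos psi - cos th * sin psi) / (sin th * cos psi))
    by (field; auto).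
  unfold Rdiv. apply Rmult_integral_contrapositive; split; auto.
  apply Rinv_neq_0_compat, Rmult_integral_contrapositive; split; auto.
Qed.

Section Main.
Variables (n : nat) (al : R) (Phi : R -> R).
Hypothesis Hn : (1 <= n)%nat.
Hypothesis Hal : PI / 8 < al <= PI / 2.
Let N := INR n.
Let c0 := PI / (8 * N).
Let r := tan c0.
Let xk := fun k : nat => cot ((al + INR k * PI) / N).
Hypothesis HPhi : forall psi, - c0 < psi < c0 -> Phi psi = cot (al - N * psi).
Hypothesis SPhi : SM (- c0) c0 Phi.

Lemma N_ge1 : 1 <= N.
Proof. apply (le_INR 1 n) in Hn. exact Hn. Qed.

Lemma c0_pos : 0 < c0.
Proof. pose proof N_ge1. pose proof PI_RGT_0. unfold c0. apply Rdiv_lt_0_compat; lra. Qed.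

Lemma Nc0 : N * c0 = PI / 8.
Proof. pose proof N_ge1. unfold c0. field. lra. Qed.

Lemma c0_lt : c0 < PI / 2.
Proof.
  pose proof N_ge1. pose proof c0_pos. pose proof Nc0. pose proof PI_RGT_0. nra.
Qed.

Lemma r_pos : 0 < r.
Proof.
  pose proof c0_pos. pose proof c0_lt. pose proof PI_RGT_0. unfold r, tan.
  apply Rdiv_lt_0_compat. apply sin_gt_0; lra. apply cos_gt_0; lra.
Qed.

Lemma atan_in t : - r < t < r -> - c0 < atan t < c0.
Proof.
  intros [H1 H2]. pose proof c0_pos. pose proof c0_lt.
  assert (E : atan r = c0) by (unfold r; apply atan_tan; lra).
  split.
  - apply atan_increasing in H1. rewrite atan_opp, E in H1. exact H1.
  - apply atan_increasing in H2. rewrite E in H2. exact H2.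
Qed.

Lemma beta_range psi : - c0 < psi < c0 -> 0 < al / N - psi < PI / N.
Proof.
  intros H. pose proof N_ge1. pose proof Nc0. pose proof PI_RGT_0. pose proof c0_pos.
  assert (E1 : al / N - psi = (al - N * psi) / N) by (field; lra).
  assert (N * psi < N * c0) by (apply Rmult_lt_compat_l; lra).
  assert (N * (- c0) < N * psi) by (apply Rmult_lt_compat_l; lra).
  rewrite E1. split.
  - apply Rdiv_lt_0_compat; nra.
  - unfold Rdiv. apply Rmult_lt_compat_r. apply Rinv_0_lt_compat; lra. nra.
Qed.

Lemma theta_range k : (k <= n - 1)%nat -> 0 < (al + INR k * PI) / N < PI.
Proof.
  intros Hk. pose proof N_ge1. pose proof PI_RGT_0. assert (0 <= INR k) by apply pos_INR.
  assert (INR k <= N - 1).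
  { apply le_INR in Hk. rewrite minus_INR in Hk by lia. simpl in Hk. exact Hk. }
  split. apply Rdiv_lt_0_compat; nra.
  apply Rmult_lt_reg_r with N; [lra|]. unfold Rdiv. rewrite Rmult_assoc, Rinv_l, Rmult_1_r by lra. nra.
Qed.

Lemma shifted_range k psi : (k <= n - 1)%nat -> - c0 < psi < c0 ->
  0 < sin ((al + INR k * PI) / N - psi).
Proof.
  intros Hk Hp. pose proof (beta_range psi Hp). pose proof N_ge1. pose proof PI_RGT_0.
  assert (0 <= INR k) by apply pos_INR.
  assert (INR k <= N - 1).
  { apply le_INR in Hk. rewrite minus_INR in Hk by lia. simpl in Hk. exact Hk. }
  replace ((al + INR k * PI) / N - psi) with ((al / N - psi) + INR k * PI / N) by (field; lra).
  apply sin_gt_0.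
  - assert (0 <= INR k * PI / N) by (apply Rdiv_le_0_compat; nra). lra.
  - assert (HH : INR k * PI / N <= (N - 1) * PI / N).
    { unfold Rdiv. apply Rmult_le_compat_r. apply Rlt_le, Rinv_0_lt_compat; lra. nra. }
    replace ((N - 1) * PI / N) with (PI - PI / N) in HH by (field; lra). lra.
Qed.

Lemma Hnz k s : (k <= n - 1)%nat -> - r < s < r -> 1 - xk k * s <> 0.
Proof.
  intros Hk Hs. pose proof (atan_in s Hs) as Hp. pose proof c0_lt.
  unfold xk. rewrite <- (tan_atan s). apply one_minus_nz.
  - apply Rgt_not_eq, sin_gt_0; apply theta_range; auto.
  - apply Rgt_not_eq, cos_gt_0; lra.
  - apply Rgt_not_eq, shifted_range; auto.
Qed.

Lemma main_identity t : - r < t < r ->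
  hsum xk (n - 1) t = N * (Derive atan t * Phi (atan t)) - N * U 1 0 t.
Proof.
  intros Ht. pose proof (atan_in t Ht) as Hp. pose proof c0_lt. pose proof N_ge1.
  set (psi := atan t) in *.
  unfold hsum.
  rewrite (sum_eq _ (fun k => cot ((al / N - psi) + INR k * PI / N) * cos psi ^ 2 - sin psi * cos psi)).
  2: { intros k Hk. unfold xk. rewrite <- (tan_atan t). fold psi.
       rewrite term_identity.
       - rewrite Rmult_comm. f_equal. f_equal. f_equal. field. lra.
       - apply Rgt_not_eq, sin_gt_0; apply theta_range; auto.
       - apply Rgt_not_eq, cos_gt_0; lra.
       - apply Rgt_not_eq, shifted_range; auto. }
  rewrite minus_sum, <- scal_sum.
  replace (sum_f_R0 (fun i => cot (al / N - psi + INR i * PI / N)) (n - 1)) with (N * cot (N * (al / N - psi))).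
  2: { symmetry. apply (cot_sum n (al / N - psi)); auto; apply beta_range; auto. }
  rewrite sum_cte. replace (S (n - 1)) with n by lia. fold N.
  rewrite HPhi by auto.
  replace (Derive atan t) with (cos psi ^ 2).
  2: { unfold psi. rewrite cos_atan2. symmetry. apply is_derive_unique, is_derive_atan. }
  unfold U. fold psi. simpl INR.
  replace (N * (al / N - psi)) with (al - N * psi) by (field; lra).
  replace (1 * psi + 0) with psi by ring. ring.
Qed.

Lemma SM_U10 a b : SM a b (U 1 0).
Proof.
  apply SM_ext with (fun t => cos (atan t) * sin (atan t)).
  - intros t _. unfold U. simpl. f_equal. ring. f_equal. ring.
  - apply SM_mult; (apply SM_comp with (- (PI/2)) (PI/2); [apply SM_sincos | apply SM_atan | intros; apply atan_maps]).
Qed.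

Lemma main_Dn M : INR (fact M) * sum_f_R0 (fun k => xk k ^ S M) (n - 1) =
  N * sum_f_R0 (fun j => Derive_n Phi j 0 * arctanA (S M) (S j)) M
  - N * (INR (fact M) * sin (INR M * (PI/2))).
Proof.
  pose proof r_pos as Hr.
  assert (H0 : - r < 0 < r) by lra.
  rewrite <- (Dn_hsum0 xk (n - 1) (- r) r Hnz M H0).
  rewrite (Derive_n_ext_loc _ (fun t => N * (Derive atan t * Phi (atan t)) - N * U 1 0 t)).
  2: { apply filter_imp with (2 := loc_int (- r) r 0 H0). intros y Hy. apply main_identity, Hy. }
  assert (S1 : SM (- r) r (fun t => N * (Derive atan t * Phi (atan t)))).
  { apply SM_scal, SM_mult. apply SM_D, SM_atan.
    apply SM_comp with (- c0) c0; auto. apply SM_atan. apply atan_in. }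
  assert (S2 : SM (- r) r (fun t => N * U 1 0 t)) by (apply SM_scal, SM_U10).
  rewrite Derive_n_minus.
  2: apply SM_loc with (- r) r; auto.
  2: apply SM_loc with (- r) r; auto.
  rewrite !Derive_n_scal_l.
  rewrite (FdB2 (- r) r (- c0) c0 atan Phi) by (auto; try apply SM_atan; apply atan_in).
  rewrite Dn_U10, atan_0.
  f_equal. f_equal. apply sum_eq. intros j _. rewrite arctanA_Bf. reflexivity.
Qed.
End Main.

Lemma c0_facts n : (1 <= n)%nat -> 0 < PI / (8 * INR n) /\ INR n * (PI / (8 * INR n)) = PI / 8.
Proof.
  intros Hn. apply (le_INR 1 n) in Hn. simpl in Hn. pose proof PI_RGT_0. split.
  apply Rdiv_lt_0_compat; lra. field. lra.
Qed.

Lemma scale_range n psi : (1 <= n)%nat -> - (PI / (8 * INR n)) < psi < PI / (8 * INR n) ->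
  - (PI / 8) < INR n * psi < PI / 8.
Proof.
  intros Hn Hp. destruct (c0_facts n Hn) as [H1 H2].
  apply (le_INR 1 n) in Hn. simpl in Hn. rewrite <- H2.
  split. replace (- (INR n * (PI / (8 * INR n)))) with (INR n * (- (PI / (8 * INR n)))) by ring.
  apply Rmult_lt_compat_l; lra. apply Rmult_lt_compat_l; lra.
Qed.

Definition Phi1 (n : nat) (psi : R) := tan (INR n * psi).

Lemma Phi1_ok n : (1 <= n)%nat -> forall psi, - (PI / (8 * INR n)) < psi < PI / (8 * INR n) ->
  Phi1 n psi = cot (PI / 2 - INR n * psi).
Proof. intros Hn psi _. unfold Phi1, cot, tan. rewrite cos_shift, sin_shift. reflexivity. Qed.

Lemma Phi1_SM n : (1 <= n)%nat -> SM (- (PI / (8 * INR n))) (PI / (8 * INR n)) (Phi1 n).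
Proof.
  intros Hn. unfold Phi1. apply SM_comp with (- (PI/2)) (PI/2).
  apply SM_tan. apply SM_scal, SM_id.
  intros x Hx. pose proof (scale_range n x Hn Hx). pose proof PI_RGT_0. lra.
Qed.

Lemma Phi1_Dn n j : Derive_n (Phi1 n) j 0 = INR n ^ j * tangentT j.
Proof.
  unfold Phi1, tangentT.
  assert (L : locally (INR n * 0) (fun x => forall k, (k <= j)%nat -> ex_derive_n tan k x)).
  { rewrite Rmult_0_r. apply SM_loc with (- (PI/2)) (PI/2). apply SM_tan. pose proof PI2_RGT_0; lra. }
  rewrite (Derive_n_comp_scal tan (INR n) j 0 L). rewrite Rmult_0_r. reflexivity.
Qed.

Lemma sum_pairs (g : nat -> R) q : sum_f_R0 g (2 * q + 1) = sum_f_R0 (fun i => g (2 * i)%nat + g (2 * i + 1)%nat) q.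
Proof.
  induction q as [|q IH]. simpl. ring.
  replace (2 * S q + 1)%nat with (S (S (2 * q + 1))) by lia.
  rewrite (sum_S g (S (2 * q + 1))), (sum_S g (2 * q + 1)), IH.
  rewrite (sum_S (fun i => g (2 * i)%nat + g (2 * i + 1)%nat) q). replace (S (2 * q + 1)) with (2 * S q)%nat by lia.
  replace (S (2 * S q)) with (2 * S q + 1)%nat by lia. ring.
Qed.

Lemma sum_n_m_1 (F : nat -> R) m : sum_n_m F 1 (S m) = sum_f_R0 (fun i => F (S i)) m.
Proof.
  rewrite <- sum_n_m_S. rewrite <- sum_n_Reals. reflexivity.
Qed.

Lemma Ssum_sum m n al : (1 <= n)%nat ->
  Ssum m n al = sum_f_R0 (fun k => cot ((al + INR k * PI) / INR n) ^ m) (n - 1).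
Proof. intros Hn. unfold Ssum. rewrite <- sum_n_Reals. reflexivity. Qed.

Lemma part1 (m n : nat) (hm : (1 <= m)%nat) (hn : (2 <= n)%nat) :
  Ssum (2 * m) n (PI / 2) =
    (-1) ^ m * INR n
    + / INR (fact (2 * m - 1)) *
      sum_n_m (fun k => INR n ^ (2 * k) * arctanA (2 * m) (2 * k) * tangentT (2 * k - 1)) 1 m.
Proof.
  destruct m as [|m']; [lia|].
  assert (Hn : (1 <= n)%nat) by lia.
  rewrite Ssum_sum by exact Hn.
  set (M := (2 * m' + 1)%nat).
  replace (2 * S m')%nat with (S M) by (unfold M; lia).
  replace (S M - 1)%nat with M by lia.
  assert (Hal : PI / 8 < PI / 2 <= PI / 2) by (pose proof PI_RGT_0; lra).
  pose proof (main_Dn n (PI/2) (Phi1 n) Hn Hal (Phi1_ok n Hn) (Phi1_SM n Hn) M) as E.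
  replace (sin (INR M * (PI/2))) with ((-1) ^ m') in E by (unfold M; symmetry; apply sin_odd).
  apply Rmult_eq_reg_l with (INR (fact M)); [|apply INR_fact_neq_0].
  rewrite E. rewrite sum_n_m_1.
  unfold M at 2. rewrite sum_pairs.
  rewrite scal_sum.
  rewrite (sum_eq _ (fun i => INR n ^ (2 * S i) * arctanA (S M) (2 * S i) * tangentT (2 * S i - 1))).
  - replace ((-1) ^ S m') with (- (-1) ^ m') by (simpl; ring). field. apply INR_fact_neq_0.
  - intros i _. rewrite !Phi1_Dn.
    rewrite tangentT_even. replace (2 * S i - 1)%nat with (2 * i + 1)%nat by lia.
    replace (S (2 * i + 1)) with (2 * S i)%nat by lia.
    assert (EP : INR n ^ (2 * S i) = INR n ^ (2 * i + 1) * INR n) by (replace (2 * S i)%nat with ((2 * i + 1) + 1)%nat by lia; rewrite pow_add; ring). rewrite EP. ring.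
Qed.

Definition Phi2 (n : nat) (psi : R) := tan (2 * INR n * psi) + / cos (2 * INR n * psi).

Lemma tansec x : - (PI / 8) < x < PI / 8 -> cot (PI / 4 - x) = tan (2 * x) + / cos (2 * x).
Proof.
  intros Hx. pose proof PI_RGT_0.
  assert (Hc : 0 < cos (x + PI/4)) by (apply cos_gt_0; lra).
  assert (Hs : 0 < sin (x + PI/4)) by (apply sin_gt_0; lra).
  rewrite cos_plus, cos_PI4, sin_PI4 in Hc. rewrite sin_plus, cos_PI4, sin_PI4 in Hs.
  assert (Hsq : 0 < sqrt 2) by (apply sqrt_lt_R0; lra).
  assert (H1 : 0 < cos x - sin x).
  { replace (cos x * (1 / sqrt 2) - sin x * (1 / sqrt 2)) with ((cos x - sin x) / sqrt 2) in Hc by (field; lra).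
    apply Rmult_lt_reg_r with (/ sqrt 2). apply Rinv_0_lt_compat; lra. rewrite Rmult_0_l. exact Hc. }
  assert (H2 : 0 < cos x + sin x).
  { replace (sin x * (1 / sqrt 2) + cos x * (1 / sqrt 2)) with ((cos x + sin x) / sqrt 2) in Hs by (field; lra).
    apply Rmult_lt_reg_r with (/ sqrt 2). apply Rinv_0_lt_compat; lra. rewrite Rmult_0_l. exact Hs. }
  unfold cot, tan. rewrite cos_minus, sin_minus, cos_PI4, sin_PI4, sin_2a, cos_2a.
  assert (E := sin2_cos2 x). unfold Rsqr in E.
  assert (Hd : cos x * cos x - sin x * sin x = (cos x - sin x) * (cos x + sin x)) by ring.
  rewrite Hd. field_simplify_eq; [|repeat split; lra].
  transitivity (2 * cos x * sin x + (sin x * sin x + cos x * cos x)). ring. rewrite E. ring.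
Qed.

Lemma Phi2_ok n : (1 <= n)%nat -> forall psi, - (PI / (8 * INR n)) < psi < PI / (8 * INR n) ->
  Phi2 n psi = cot (PI / 4 - INR n * psi).
Proof.
  intros Hn psi Hp. unfold Phi2. rewrite tansec by (apply scale_range; auto).
  replace (2 * INR n * psi) with (2 * (INR n * psi)) by ring. reflexivity.
Qed.

Lemma SM_Z : SM (- (PI/2)) (PI/2) (fun z => tan z + / cos z).
Proof. apply SM_plus. apply SM_tan. apply SM_sec. Qed.

Lemma Phi2_SM n : (1 <= n)%nat -> SM (- (PI / (8 * INR n))) (PI / (8 * INR n)) (Phi2 n).
Proof.
  intros Hn. unfold Phi2.
  apply (SM_comp _ _ (- (PI/2)) (PI/2) (fun z => tan z + / cos z) (fun psi => 2 * INR n * psi)).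
  apply SM_Z. apply SM_scal, SM_id.
  intros x Hx. pose proof (scale_range n x Hn Hx). pose proof PI_RGT_0. lra.
Qed.

Lemma Phi2_Dn n j : Derive_n (Phi2 n) j 0 = (2 * INR n) ^ j * zigzagE j.
Proof.
  unfold Phi2, zigzagE.
  assert (L : locally (2 * INR n * 0) (fun x => forall k, (k <= j)%nat -> ex_derive_n (fun z => tan z + / cos z) k x)).
  { rewrite Rmult_0_r. apply SM_loc with (- (PI/2)) (PI/2). apply SM_Z. pose proof PI2_RGT_0; lra. }
  pose proof (Derive_n_comp_scal (fun z => tan z + / cos z) (2 * INR n) j 0 L) as H.
  rewrite Rmult_0_r in H. exact H.
Qed.

Lemma part2 (m n : nat) (hm : (1 <= m)%nat) (hn : (2 <= n)%nat) :
  Ssum m n (PI / 4) =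
    (if Nat.even m then (-1) ^ (m / 2) * INR n else 0)
    + / (2 * INR (fact (m - 1))) *
      sum_n_m (fun k => (2 * INR n) ^ k * arctanA m k * zigzagE (k - 1)) 1 m.
Proof.
  destruct m as [|m']; [lia|].
  assert (Hn : (1 <= n)%nat) by lia.
  rewrite Ssum_sum by exact Hn.
  replace (S m' - 1)%nat with m' by lia.
  assert (Hal : PI / 8 < PI / 4 <= PI / 2) by (pose proof PI_RGT_0; lra).
  pose proof (main_Dn n (PI/4) (Phi2 n) Hn Hal (Phi2_ok n Hn) (Phi2_SM n Hn) m') as E.
  apply Rmult_eq_reg_l with (INR (fact m')); [|apply INR_fact_neq_0].
  rewrite E. rewrite sum_n_m_1. rewrite scal_sum.
  rewrite (sum_eq (fun i => Derive_n (Phi2 n) i 0 * arctanA (S m') (S i) * INR n)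
                  (fun i => ((2 * INR n) ^ S i * arctanA (S m') (S i) * zigzagE (S i - 1)) * / 2)).
  2: { intros i _. rewrite Phi2_Dn. replace (S i - 1)%nat with i by lia. simpl pow. field. }
  rewrite <- scal_sum.
  destruct (Nat.Even_or_Odd m') as [[q Hq]|[q Hq]].
  - assert (Ev : Nat.even (S m') = false).
    { rewrite Hq. replace (S (2 * q)) with (1 + 2 * q)%nat by lia. rewrite Nat.even_add_mul_2. reflexivity. }
    rewrite Ev. replace (sin (INR m' * (PI/2))) with 0 by (rewrite Hq; symmetry; apply sin_even). field. apply INR_fact_neq_0.
  - assert (Ev : Nat.even (S m') = true).
    { rewrite Hq. replace (S (2 * q + 1)) with (2 * (q + 1))%nat by lia. apply Nat.even_mul. }
    assert (Dv : (S m' / 2 = q + 1)%nat).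
    { rewrite Hq. replace (S (2 * q + 1)) with ((q + 1) * 2)%nat by lia. apply Nat.div_mul. lia. }
    rewrite Ev, Dv. replace (sin (INR m' * (PI/2))) with ((-1) ^ q) by (rewrite Hq; symmetry; apply sin_odd).
    rewrite pow_add. field. apply INR_fact_neq_0.
Qed.


Open Scope R_scope.
Theorem corollary6p6 (m n : nat) (hm : (1 <= m)%nat) (hn : (2 <= n)%nat) :
  Ssum (2 * m) n (PI / 2) =
    (-1) ^ m * INR n
    + / INR (fact (2 * m - 1)) *
      sum_n_m (fun k => INR n ^ (2 * k) * arctanA (2 * m) (2 * k) * tangentT (2 * k - 1)) 1 m
  /\
  Ssum m n (PI / 4) =
    (if Nat.even m then (-1) ^ (m / 2) * INR n else 0)
    + / (2 * INR (fact (m - 1))) *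
      sum_n_m (fun k => (2 * INR n) ^ k * arctanA m k * zigzagE (k - 1)) 1 m.
Proof.
  split; [apply part1 | apply part2]; assumption.
Qed.
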